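(* For every $x\in(0,\infty)$ and $k\in\mathbb{Z}$, $\mathcal{S}_k\big(a^{\rm st}(x),b^{\rm st}(x),m^{\rm st}(x),n^{\rm st}(x)\big)=\big(a^{\rm st}(s_k(x)),b^{\rm st}(s_k(x)),m^{\rm st}(s_k(x)),n^{\rm st}(s_k(x))\big)$.
   Context: ABMN system on $\mathbb{Z}$: $a_i,b_i\ge0$, $m_i,n_i\in\mathbb{R}$ with $(a_i+b_i)(m_i+a_i)=a_im_{i+1}+b_im_{i-1}$, $(a_i+b_i)(n_i+b_i)=a_in_{i+1}+b_in_{i-1}$, $(a_i+b_i)^2=b_i(m_{i+1}-m_{i-1})$, $(a_i+b_i)^2=a_i(n_{i-1}-n_{i+1})$ for all $i$; positive if all $a_i,b_i>0$. A positive solution is standard if $\lim_{i\to-\infty}m_i=0$, $\lim_{i\to\infty}n_i=0$, $\lim_{i\to\infty}m_i=1$; for $x>0$, $(a^{\rm st}(x),b^{\rm st}(x),m^{\rm st}(x),n^{\rm st}(x))$ is the unique standard solution with central ratio $\frac{n_{-1}-n_0}{m_0-m_{-1}}=x$. $\mathcal{S}_k$ is the left shift by $k$: $(\mathcal{S}_kq)_i=q_{i+k}$ applied to all four components. $s(x)=\frac{(\omega-1)^2}{4(\omega+7)}$, $\omega=\sqrt{8x+1}$; $s_0=\mathrm{id}$, $s_{-1}(x)=1/s(1/x)$, $s_i=s\circ s_{i-1}$, $s_{-i}=s_{-1}\circ s_{-(i-1)}$ for $i\in\mathbb{N}_+$. *)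

(* Defs.v *)
From Stdlib Require Import Reals ZArith Lra ClassicalEpsilon.
Open Scope R_scope.

Record quad := Quad { qa : Z -> R; qb : Z -> R; qm : Z -> R; qn : Z -> R }.

Definition ABMN_system (q : quad) : Prop :=
  forall i : Z,
    0 <= qa q i /\ 0 <= qb q i /\
    (qa q i + qb q i) * (qm q i + qa q i)
      = qa q i * qm q (i + 1)%Z + qb q i * qm q (i - 1)%Z /\
    (qa q i + qb q i) * (qn q i + qb q i)
      = qa q i * qn q (i + 1)%Z + qb q i * qn q (i - 1)%Z /\
    (qa q i + qb q i) ^ 2 = qb q i * (qm q (i + 1)%Z - qm q (i - 1)%Z) /\
    (qa q i + qb q i) ^ 2 = qa q i * (qn q (i - 1)%Z - qn q (i + 1)%Z).

Definition positive_solution (q : quad) : Prop :=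
  ABMN_system q /\ forall i : Z, 0 < qa q i /\ 0 < qb q i.

Definition lim_plus (u : Z -> R) (l : R) : Prop :=
  Un_cv (fun k : nat => u (Z.of_nat k)) l.
Definition lim_minus (u : Z -> R) (l : R) : Prop :=
  Un_cv (fun k : nat => u (- Z.of_nat k)%Z) l.

Definition standard (q : quad) : Prop :=
  positive_solution q /\
  lim_minus (qm q) 0 /\ lim_plus (qn q) 0 /\ lim_plus (qm q) 1.

Definition central_ratio (q : quad) : R :=
  (qn q (-1)%Z - qn q 0%Z) / (qm q 0%Z - qm q (-1)%Z).

Definition zero_quad : quad :=
  Quad (fun _ => 0) (fun _ => 0) (fun _ => 0) (fun _ => 0).

(* The (unique, by the paper) standard solution with central ratio x,
   selected by Hilbert's epsilon. *)
Definition std_sol (x : R) : quad :=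
  epsilon (inhabits zero_quad)
    (fun q => standard q /\ central_ratio q = x).

Definition shift_quad (k : Z) (q : quad) : quad :=
  Quad (fun i => qa q (i + k)%Z) (fun i => qb q (i + k)%Z)
       (fun i => qm q (i + k)%Z) (fun i => qn q (i + k)%Z).

Definition s_map (x : R) : R :=
  let w := sqrt (8 * x + 1) in (w - 1) ^ 2 / (4 * (w + 7)).

Definition s_inv (x : R) : R := / s_map (/ x).

Fixpoint iter_fun (n : nat) (f : R -> R) (x : R) : R :=
  match n with O => x | S n' => f (iter_fun n' f x) end.

Definition s_Z (k : Z) (x : R) : R :=
  match k with
  | Z0 => x
  | Zpos p => iter_fun (Pos.to_nat p) s_map x
  | Zneg p => iter_fun (Pos.to_nat p) s_inv x
  end.

(* Main.v *)
Require Import Defs.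
From Stdlib Require Import Reals ZArith.
Open Scope R_scope.
From Stdlib Require Import Lra Psatz FunctionalExtensionality ClassicalEpsilon.
Lemma sqrt_sq_pos (y : R) : 0 <= y -> sqrt (y * y) = y.
Proof. intro H. apply sqrt_square; exact H. Qed.

Lemma s_map_t (t : R) : 0 < t -> s_map (t * (1 + 2 * t)) = t ^ 2 / (t + 2).
Proof.
  intro Ht. unfold s_map.
  replace (8 * (t * (1 + 2 * t)) + 1) with ((4*t+1)*(4*t+1)) by ring.
  rewrite sqrt_sq_pos by lra. field. lra.
Qed.

Lemma s_inv_t (u : R) : 0 < u -> s_inv (u ^ 2 / (u + 2)) = u * (1 + 2 * u).
Proof.
  intro Hu. unfold s_inv, s_map.
  replace (8 * / (u ^ 2 / (u + 2)) + 1) with (((u+4)/u)*((u+4)/u)) by (field; lra).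
  rewrite sqrt_sq_pos.
  2:{ apply Rlt_le, Rdiv_lt_0_compat; lra. }
  field. split; [lra|]. split; [lra|]. nra.
Qed.

Lemma loc_eqs (a b m0 m m1 n0 n n1 : R) : 0 < a -> 0 < b ->
  (a + b) * (m + a) = a * m1 + b * m0 ->
  (a + b) * (n + b) = a * n1 + b * n0 ->
  (a + b) ^ 2 = b * (m1 - m0) ->
  (a + b) ^ 2 = a * (n0 - n1) ->
  m1 - m = 2*a + b /\ m - m0 = a^2/b /\ n0 - n = a + 2*b /\ n - n1 = b^2/a.
Proof.
  intros Ha Hb H1 H2 H3 H4.
  assert (E1 : m1 - m = 2*a+b).
  { apply (Rmult_eq_reg_l (a+b)); [|lra]. nra. }
  assert (E3 : n0 - n = a + 2*b).
  { apply (Rmult_eq_reg_l (a+b)); [|lra]. nra. }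
  split; [exact E1|]. split.
  { apply (Rmult_eq_reg_l b); [|lra]. field_simplify; [|lra]. nra. }
  split; [exact E3|].
  { apply (Rmult_eq_reg_l a); [|lra]. field_simplify; [|lra]. nra. }
Qed.

Lemma loc_eqs_conv (a b m0 m m1 n0 n n1 : R) : 0 < a -> 0 < b ->
  m1 - m = 2*a + b -> m - m0 = a^2/b -> n0 - n = a + 2*b -> n - n1 = b^2/a ->
  (a + b) * (m + a) = a * m1 + b * m0 /\
  (a + b) * (n + b) = a * n1 + b * n0 /\
  (a + b) ^ 2 = b * (m1 - m0) /\
  (a + b) ^ 2 = a * (n0 - n1).
Proof.
  intros Ha Hb E1 E2 E3 E4.
  assert (m1 = m + 2*a+b) by lra. assert (m0 = m - a^2/b) by lra.
  assert (n0 = n + a + 2*b) by lra. assert (n1 = n - b^2/a) by lra.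
  subst m1 m0 n0 n1. repeat split; field; lra.
Qed.

Lemma pos_E (q : quad) : positive_solution q -> forall i : Z,
  0 < qa q i /\ 0 < qb q i /\
  qm q (i+1)%Z - qm q i = 2 * qa q i + qb q i /\
  qm q i - qm q (i-1)%Z = qa q i ^ 2 / qb q i /\
  qn q (i-1)%Z - qn q i = qa q i + 2 * qb q i /\
  qn q i - qn q (i+1)%Z = qb q i ^ 2 / qa q i.
Proof.
  intros [Hs Hp] i.
  destruct (Hp i) as [Ha Hb].
  destruct (Hs i) as (_ & _ & H1 & H2 & H3 & H4).
  destruct (loc_eqs _ _ _ _ _ _ _ _ Ha Hb H1 H2 H3 H4) as (E1 & E2 & E3 & E4).
  tauto.
Qed.

Definition tq (q : quad) (i : Z) : R := qb q i / qa q i.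
Definition Lq (q : quad) (i : Z) : R :=
  (qn q (i-1)%Z - qn q i) / (qm q i - qm q (i-1)%Z).

Lemma tq_pos q : positive_solution q -> forall i, 0 < tq q i.
Proof. intros H i. destruct (pos_E q H i) as (Ha & Hb & _). unfold tq.
  apply Rdiv_lt_0_compat; lra. Qed.

Lemma Lq_t q : positive_solution q -> forall i, Lq q i = tq q i * (1 + 2 * tq q i).
Proof.
  intros H i. destruct (pos_E q H i) as (Ha & Hb & E1 & E2 & E3 & E4).
  unfold Lq, tq. rewrite E2, E3. field. lra.
Qed.

Lemma step_eqs q : positive_solution q -> forall i,
  tq q (i+1) * (1 + 2 * tq q (i+1)) = tq q i ^ 2 / (tq q i + 2) /\
  qa q (i+1) = qa q i * (2 + tq q i) * tq q (i+1).
Proof.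
  intros H i. destruct (pos_E q H i) as (Ha & Hb & E1 & E2 & E3 & E4).
  destruct (pos_E q H (i+1)) as (Ha' & Hb' & E1' & E2' & E3' & E4').
  replace (i + 1 - 1)%Z with i in E2', E3' by ring.
  unfold tq.
  assert (K1 : qa q (i+1)%Z ^ 2 = qb q (i+1)%Z * (2 * qa q i + qb q i)).
  { rewrite <- E1, E2'. field. lra. }
  assert (K2 : qa q (i+1)%Z + 2 * qb q (i+1)%Z = qb q i ^ 2 / qa q i) by lra.
  split.
  - replace (qb q (i + 1)%Z / qa q (i + 1)%Z * (1 + 2 * (qb q (i + 1)%Z / qa q (i + 1)%Z)))
      with (qb q (i + 1)%Z * (qa q (i+1)%Z + 2 * qb q (i+1)%Z) / qa q (i + 1)%Z ^ 2)
      by (field; lra).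
    rewrite K1, K2. field. repeat split; lra.
  - apply (Rmult_eq_reg_l (qa q (i+1)%Z)); [|lra].
    replace (qa q (i + 1)%Z * qa q (i + 1)%Z) with (qa q (i+1)%Z ^ 2) by ring.
    rewrite K1. field. lra.
Qed.

Lemma Lq_succ q : positive_solution q -> forall i, Lq q (i+1) = s_map (Lq q i).
Proof.
  intros H i. rewrite !Lq_t by exact H. destruct (step_eqs q H i) as [E _].
  rewrite E, s_map_t; [reflexivity | apply tq_pos; exact H].
Qed.

Lemma Lq_pred q : positive_solution q -> forall i, Lq q (i-1) = s_inv (Lq q i).
Proof.
  intros H i. destruct (step_eqs q H (i-1)) as [E _].
  replace (i - 1 + 1)%Z with i in E by ring.
  rewrite !Lq_t by exact H. rewrite E, s_inv_t; [reflexivity | apply tq_pos; exact H].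
Qed.

Lemma cr_shift q k : central_ratio (shift_quad k q) = Lq q k.
Proof.
  unfold central_ratio, shift_quad, Lq; cbn [qa qb qm qn].
  replace (-1 + k)%Z with (k - 1)%Z by ring. replace (0 + k)%Z with k by ring.
  reflexivity.
Qed.

Lemma Lq_sZ q : positive_solution q -> forall k, Lq q k = s_Z k (Lq q 0).
Proof.
  intros H k.
  assert (P : forall n : nat, Lq q (Z.of_nat n) = iter_fun n s_map (Lq q 0)).
  { induction n as [|n IH]; [reflexivity|].
    rewrite Nat2Z.inj_succ, <- Z.add_1_r, Lq_succ by exact H. simpl. rewrite IH. reflexivity. }
  assert (N : forall n : nat, Lq q (- Z.of_nat n) = iter_fun n s_inv (Lq q 0)).
  { induction n as [|n IH]; [reflexivity|].
    replace (- Z.of_nat (S n))%Z with (- Z.of_nat n - 1)%Z by lia.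
    rewrite Lq_pred by exact H. simpl. rewrite IH. reflexivity. }
  destruct k as [|p|p]; simpl.
  - reflexivity.
  - rewrite <- P. f_equal. lia.
  - rewrite <- N. f_equal. lia.
Qed.

Lemma lim_plus_shift u l k : lim_plus u l -> lim_plus (fun i => u (i + k)%Z) l.
Proof.
  unfold lim_plus, Un_cv. intros H eps He. destruct (H eps He) as [N HN].
  exists (N + Z.to_nat (Z.abs k))%nat. intros n Hn.
  replace (Z.of_nat n + k)%Z with (Z.of_nat (Z.to_nat (Z.of_nat n + k))) by lia.
  apply HN. lia.
Qed.

Lemma lim_minus_shift u l k : lim_minus u l -> lim_minus (fun i => u (i + k)%Z) l.
Proof.
  unfold lim_minus, Un_cv. intros H eps He. destruct (H eps He) as [N HN].
  exists (N + Z.to_nat (Z.abs k))%nat. intros n Hn.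
  replace (- Z.of_nat n + k)%Z with (- Z.of_nat (Z.to_nat (Z.of_nat n - k)))%Z by lia.
  apply HN. lia.
Qed.

Lemma standard_shift q k : standard q -> standard (shift_quad k q).
Proof.
  intros [[Hs Hp] [L1 [L2 L3]]]. unfold shift_quad.
  split; [split|]; cbn [qa qb qm qn].
  - intro i. cbn [qa qb qm qn]. destruct (Hs (i + k)%Z) as (A1 & A2 & A3 & A4 & A5 & A6).
    replace (i + 1 + k)%Z with (i + k + 1)%Z by ring.
    replace (i - 1 + k)%Z with (i + k - 1)%Z by ring.
    tauto.
  - intro i. cbn [qa qb qm qn]. apply Hp.
  - split; [|split].
    + apply (lim_minus_shift (qm q)); exact L1.
    + apply (lim_plus_shift (qn q)); exact L2.
    + apply (lim_plus_shift (qm q)); exact L3.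
Qed.

Lemma ZindR (P : Z -> Prop) : P 0%Z -> (forall i, P i -> P (i+1)%Z) ->
  (forall i, P i -> P (i-1)%Z) -> forall i, P i.
Proof.
  intros H0 Hs Hp. apply Z.peano_ind; [exact H0| |].
  - intros x Hx. rewrite <- Z.add_1_r. apply Hs, Hx.
  - intros x Hx. rewrite <- Z.sub_1_r. apply Hp, Hx.
Qed.

Lemma const_lim (u : nat -> R) c l : (forall n, u n = c) -> Un_cv u l -> c = l.
Proof.
  intros Hc Hl. apply (UL_sequence u); [|exact Hl].
  intros eps He. exists 0%nat. intros n _. rewrite Hc. unfold R_dist.
  replace (c - c) with 0 by ring. rewrite Rabs_R0. exact He.
Qed.

Lemma cr_Lq0 q : central_ratio q = Lq q 0.
Proof. reflexivity. Qed.

Lemma uniq_std q1 q2 : standard q1 -> standard q2 ->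
  central_ratio q1 = central_ratio q2 -> q1 = q2.
Proof.
  intros S1 S2 Hc.
  destruct S1 as [P1 [M1 [N1 U1]]]. destruct S2 as [P2 [M2 [N2 U2]]].
  assert (T0 : tq q1 0 = tq q2 0).
  { rewrite !cr_Lq0, (Lq_t q1 P1), (Lq_t q2 P2) in Hc.
    pose proof (tq_pos q1 P1 0). pose proof (tq_pos q2 P2 0). nra. }
  assert (TT : forall i, tq q1 i = tq q2 i).
  { apply ZindR; [exact T0| |].
    - intros i Hi. destruct (step_eqs q1 P1 i) as [E1 _]. destruct (step_eqs q2 P2 i) as [E2 _].
      rewrite Hi in E1. rewrite <- E2 in E1.
      pose proof (tq_pos q1 P1 (i+1)). pose proof (tq_pos q2 P2 (i+1)). nra.
    - intros i Hi. destruct (step_eqs q1 P1 (i-1)) as [E1 _]. destruct (step_eqs q2 P2 (i-1)) as [E2 _].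
      replace (i - 1 + 1)%Z with i in E1, E2 by ring.
      rewrite Hi, E2 in E1.
      pose proof (tq_pos q1 P1 (i-1)). pose proof (tq_pos q2 P2 (i-1)).
      set (x := tq q1 (i-1)) in *. set (y := tq q2 (i-1)) in *.
      assert (H3 : y ^ 2 / (y + 2) * ((x+2)*(y+2)) = x ^ 2 / (x + 2) * ((x+2)*(y+2))) by (rewrite E1; reflexivity).
      replace (y ^ 2 / (y + 2) * ((x+2)*(y+2))) with (y^2*(x+2)) in H3 by (field; lra).
      replace (x ^ 2 / (x + 2) * ((x+2)*(y+2))) with (x^2*(y+2)) in H3 by (field; lra).
      assert (H4 : (x-y)*(x*y+2*x+2*y) = 0) by nra.
      destruct (Rmult_integral _ _ H4); nra. }
  set (lam := qa q2 0 / qa q1 0).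
  assert (Hlam : 0 < lam).
  { destruct (pos_E q1 P1 0) as [A1 _]. destruct (pos_E q2 P2 0) as [A2 _].
    apply Rdiv_lt_0_compat; lra. }
  assert (AA : forall i, qa q2 i = lam * qa q1 i).
  { apply ZindR.
    - unfold lam. destruct (pos_E q1 P1 0) as [A1 _]. field. lra.
    - intros i Hi. destruct (step_eqs q1 P1 i) as [_ E1]. destruct (step_eqs q2 P2 i) as [_ E2].
      rewrite E1, E2, Hi, !TT. ring.
    - intros i Hi. destruct (step_eqs q1 P1 (i-1)) as [_ E1]. destruct (step_eqs q2 P2 (i-1)) as [_ E2].
      replace (i - 1 + 1)%Z with i in E1, E2 by ring.
      rewrite Hi, E1, !TT in E2.
      pose proof (tq_pos q2 P2 (i-1)). pose proof (tq_pos q2 P2 i).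
      assert (0 < (2 + tq q2 (i - 1)) * tq q2 i) by nra.
      apply (Rmult_eq_reg_r ((2 + tq q2 (i - 1)) * tq q2 i)); [|lra].
      rewrite <- !Rmult_assoc. lra. }
  assert (BB : forall i, qb q2 i = lam * qb q1 i).
  { intro i. pose proof (TT i) as Ti. unfold tq in Ti. rewrite AA in Ti.
    destruct (pos_E q1 P1 i) as (A1 & B1 & _). 
    apply (Rmult_eq_reg_r (/ (lam * qa q1 i))).
    - change (qb q2 i * / (lam * qa q1 i)) with (qb q2 i / (lam * qa q1 i)). rewrite <- Ti. field. lra.
    - apply Rinv_neq_0_compat. nra. }
  set (D := fun i => qm q2 i - lam * qm q1 i).
  assert (DD : forall i, D i = D 0%Z).
  { apply ZindR; [reflexivity| |].
    - intros i Hi. rewrite <- Hi. unfold D.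
      destruct (pos_E q1 P1 i) as (_ & _ & E1 & _). destruct (pos_E q2 P2 i) as (_ & _ & E2 & _).
      rewrite AA, BB in E2. nra.
    - intros i Hi. rewrite <- Hi. unfold D.
      destruct (pos_E q1 P1 (i-1)) as (_ & _ & E1 & _). destruct (pos_E q2 P2 (i-1)) as (_ & _ & E2 & _).
      replace (i - 1 + 1)%Z with i in E1, E2 by ring.
      rewrite AA, BB in E2. nra. }
  assert (D0 : D 0%Z = 0).
  { apply (const_lim (fun n => D (- Z.of_nat n)%Z)); [intro n; apply DD|].
    unfold D. replace 0 with (0 - lam * 0) by ring.
    apply CV_minus; [exact M2|]. apply (CV_mult (fun _ => lam) _ lam 0); [|exact M1].
    intros eps He. exists 0%nat. intros. unfold R_dist. rewrite Rminus_diag, Rabs_R0. exact He. }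
  assert (L1 : D 0%Z = 1 - lam).
  { apply (const_lim (fun n => D (Z.of_nat n)%Z)); [intro n; apply DD|].
    unfold D. replace (1 - lam) with (1 - lam * 1) by ring.
    apply CV_minus; [exact U2|]. apply (CV_mult (fun _ => lam) _ lam 1); [|exact U1].
    intros eps He. exists 0%nat. intros. unfold R_dist. rewrite Rminus_diag, Rabs_R0. exact He. }
  assert (lam1 : lam = 1) by lra.
  assert (MM : forall i, qm q2 i = qm q1 i).
  { intro i. pose proof (DD i). unfold D in *. rewrite lam1 in *. lra. }
  set (E := fun i => qn q2 i - qn q1 i).
  assert (EE : forall i, E i = E 0%Z).
  { apply ZindR; [reflexivity| |].
    - intros i Hi. rewrite <- Hi. unfold E.
      destruct (pos_E q1 P1 i) as (_ & _ & _ & _ & _ & E1). destruct (pos_E q2 P2 i) as (_ & _ & _ & _ & _ & E2).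
      rewrite AA, BB, lam1, !Rmult_1_l in E2. lra.
    - intros i Hi. rewrite <- Hi. unfold E.
      destruct (pos_E q1 P1 (i-1)) as (_ & _ & _ & _ & _ & E1). destruct (pos_E q2 P2 (i-1)) as (_ & _ & _ & _ & _ & E2).
      replace (i - 1 + 1)%Z with i in E1, E2 by ring.
      rewrite AA, BB, lam1, !Rmult_1_l in E2. lra. }
  assert (E0 : E 0%Z = 0).
  { apply (const_lim (fun n => E (Z.of_nat n)%Z)); [intro n; apply EE|].
    unfold E. replace 0 with (0 - 0) by ring. apply CV_minus; assumption. }
  assert (NN : forall i, qn q2 i = qn q1 i).
  { intro i. pose proof (EE i). unfold E in *. lra. }
  destruct q1 as [a1 b1 m1 n1], q2 as [a2 b2 m2 n2]. cbn in *.
  f_equal; apply functional_extensionality; intro i.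
  - rewrite AA, lam1. ring.
  - rewrite BB, lam1. ring.
  - symmetry. apply MM.
  - symmetry. apply NN.
Qed.

From Coquelicot Require Import Coquelicot.

Definition Tm (y : R) : R := (sqrt (8 * y + 1) - 1) / 4.
Definition Hm (t : R) : R :=
  let y := t * (1 + 2 * t) in (y + sqrt (y ^ 2 + 8 * y)) / 2.
Definition Gm (t : R) : R := Tm (t ^ 2 / (t + 2)).

Lemma Tm_pos y : 0 < y -> 0 < Tm y.
Proof.
  intro H. unfold Tm. assert (1 < sqrt (8 * y + 1)).
  { rewrite <- sqrt_1 at 1. apply sqrt_lt_1_alt. split; lra. }
  lra.
Qed.

Lemma Tm_eq y : 0 <= y -> Tm y * (1 + 2 * Tm y) = y.
Proof.
  intro H. unfold Tm. pose proof (sqrt_sqrt (8 * y + 1)) as S.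
  assert (0 <= 8 * y + 1) by lra. specialize (S H0).
  set (w := sqrt (8 * y + 1)) in *. nra.
Qed.

Lemma Hm_pos t : 0 < t -> 0 < Hm t.
Proof.
  intro H. unfold Hm. assert (0 < t * (1 + 2 * t)) by nra.
  pose proof (sqrt_pos ((t * (1 + 2 * t)) ^ 2 + 8 * (t * (1 + 2 * t)))). 
  cbv zeta. lra.
Qed.

Lemma Hm_eq t : 0 < t -> Hm t ^ 2 / (Hm t + 2) = t * (1 + 2 * t).
Proof.
  intro H. pose proof (Hm_pos t H) as Hp. revert Hp. unfold Hm. cbv zeta.
  set (y := t * (1 + 2 * t)). assert (0 < y) by (unfold y; nra).
  pose proof (sqrt_sqrt (y ^ 2 + 8 * y)) as S.
  assert (0 <= y ^ 2 + 8 * y) by nra. specialize (S H1).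
  set (w := sqrt (y ^ 2 + 8 * y)) in *. intro Hp.
  apply (Rmult_eq_reg_r ((y + w) / 2 + 2)); [|lra].
  field_simplify; [|lra]. nra.
Qed.

Lemma Gm_pos t : 0 < t -> 0 < Gm t.
Proof. intro H. unfold Gm. apply Tm_pos. apply Rdiv_lt_0_compat; nra. Qed.

Lemma Gm_eq t : 0 < t -> Gm t * (1 + 2 * Gm t) = t ^ 2 / (t + 2).
Proof. intro H. unfold Gm. apply Tm_eq. apply Rlt_le, Rdiv_lt_0_compat; nra. Qed.

Section Seq.
Variable t0 : R.
Hypothesis ht0 : 0 < t0.

Fixpoint tf (n : nat) : R := match n with O => t0 | S n => Gm (tf n) end.
Fixpoint tb (n : nat) : R := match n with O => t0 | S n => Hm (tb n) end.
Definition tz (i : Z) : R :=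
  if (0 <=? i)%Z then tf (Z.to_nat i) else tb (Z.to_nat (- i)).
Fixpoint af (n : nat) : R :=
  match n with O => 1 | S n => af n * (2 + tf n) * tf (S n) end.
Fixpoint ab (n : nat) : R :=
  match n with O => 1 | S n => ab n / ((2 + tb (S n)) * tb n) end.
Definition az (i : Z) : R :=
  if (0 <=? i)%Z then af (Z.to_nat i) else ab (Z.to_nat (- i)).

Lemma tf_pos n : 0 < tf n.
Proof. induction n; simpl; [exact ht0 | apply Gm_pos; exact IHn]. Qed.
Lemma tb_pos n : 0 < tb n.
Proof. induction n; simpl; [exact ht0 | apply Hm_pos; exact IHn]. Qed.
Lemma af_pos n : 0 < af n.
Proof. induction n; cbn [af]; [lra|]. pose proof (tf_pos n). pose proof (tf_pos (S n)).
  apply Rmult_lt_0_compat; [apply Rmult_lt_0_compat|]; lra. Qed.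
Lemma ab_pos n : 0 < ab n.
Proof. induction n; cbn [ab]; [lra|]. pose proof (tb_pos n). pose proof (tb_pos (S n)).
  apply Rdiv_lt_0_compat; [lra|]. nra. Qed.

Lemma tz_nat n : tz (Z.of_nat n) = tf n.
Proof. unfold tz. destruct (Z.leb_spec 0 (Z.of_nat n)); [|lia]. rewrite Nat2Z.id. reflexivity. Qed.
Lemma tz_neg n : tz (- Z.of_nat n) = tb n.
Proof. unfold tz. destruct (Z.leb_spec 0 (- Z.of_nat n)).
  - assert (n = 0%nat) by lia. subst n. reflexivity.
  - f_equal. lia. Qed.
Lemma az_nat n : az (Z.of_nat n) = af n.
Proof. unfold az. destruct (Z.leb_spec 0 (Z.of_nat n)); [|lia]. rewrite Nat2Z.id. reflexivity. Qed.
Lemma az_neg n : az (- Z.of_nat n) = ab n.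
Proof. unfold az. destruct (Z.leb_spec 0 (- Z.of_nat n)).
  - assert (n = 0%nat) by lia. subst n. reflexivity.
  - f_equal. lia. Qed.

Lemma Z_cases (i : Z) : (exists n, i = Z.of_nat n) \/ (exists n, i = (- Z.of_nat (S n))%Z).
Proof.
  destruct (Z.leb_spec 0 i).
  - left. exists (Z.to_nat i). lia.
  - right. exists (Z.to_nat (- i - 1)). lia.
Qed.

Lemma tz_pos i : 0 < tz i.
Proof. destruct (Z_cases i) as [[n ->]|[n ->]]; [rewrite tz_nat; apply tf_pos | rewrite tz_neg; apply tb_pos]. Qed.
Lemma az_pos i : 0 < az i.
Proof. destruct (Z_cases i) as [[n ->]|[n ->]]; [rewrite az_nat; apply af_pos | rewrite az_neg; apply ab_pos]. Qed.

Lemma tz_R i : tz (i+1) * (1 + 2 * tz (i+1)) = tz i ^ 2 / (tz i + 2).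
Proof.
  destruct (Z_cases i) as [[n ->]|[n ->]].
  - replace (Z.of_nat n + 1)%Z with (Z.of_nat (S n)) by lia.
    rewrite !tz_nat. simpl. apply Gm_eq, tf_pos.
  - replace (- Z.of_nat (S n) + 1)%Z with (- Z.of_nat n)%Z by lia.
    rewrite !tz_neg. simpl. symmetry. apply Hm_eq, tb_pos.
Qed.

Lemma az_step i : az (i+1) = az i * (2 + tz i) * tz (i+1).
Proof.
  destruct (Z_cases i) as [[n ->]|[n ->]].
  - replace (Z.of_nat n + 1)%Z with (Z.of_nat (S n)) by lia.
    rewrite !tz_nat, !az_nat. reflexivity.
  - replace (- Z.of_nat (S n) + 1)%Z with (- Z.of_nat n)%Z by lia.
    rewrite !tz_neg, !az_neg. cbn [ab]. pose proof (tb_pos n). pose proof (tb_pos (S n)).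
    field. split; lra.
Qed.


Lemma geom_lim K r : 0 <= r < 1 -> is_lim_seq (fun n => K * r ^ n) 0.
Proof.
  intro H. replace 0 with (K * 0) by ring. apply is_lim_seq_mult'.
  - apply is_lim_seq_const.
  - apply is_lim_seq_geom. rewrite Rabs_pos_eq; lra.
Qed.

Lemma dal (a : nat -> R) K r : (forall n, 0 < a n) -> 0 <= r < 1 ->
  (forall n, a (S n) <= a n * (K * r ^ n)) -> ex_series a.
Proof.
  intros Hp Hr Hb.
  apply (ex_series_ext (fun n => Rabs (a n))).
  { intro n. apply Rabs_pos_eq. apply Rlt_le, Hp. }
  apply (ex_series_DAlembert a 0); [lra| intro n; apply Rgt_not_eq, Hp |].
  apply (is_lim_seq_le_le (fun _ => 0) _ (fun n => K * r ^ n)).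
  - intro n. pose proof (Hp n). pose proof (Hp (S n)). rewrite Rabs_pos_eq.
    2:{ apply Rlt_le, Rdiv_lt_0_compat; lra. }
    split; [apply Rlt_le, Rdiv_lt_0_compat; lra|].
    apply (Rmult_le_reg_r (a n)); [lra|]. unfold Rdiv. rewrite Rmult_assoc, Rinv_l by lra.
    specialize (Hb n). lra.
  - apply is_lim_seq_const.
  - apply geom_lim, Hr.
Qed.

Definition uz (i : Z) : R := az i * (2 + tz i).
Definition vz (i : Z) : R := tz i ^ 2 * az i.
Definition bz (i : Z) : R := tz i * az i.

Lemma tf_dec n : tf (S n) <= tf n * (tf n / (tf n + 2)).
Proof.
  cbn [tf]. pose proof (Gm_eq (tf n) (tf_pos n)). pose proof (Gm_pos (tf n) (tf_pos n)).
  pose proof (tf_pos n).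
  replace (tf n * (tf n / (tf n + 2))) with (tf n ^ 2 / (tf n + 2)) by (field; lra). nra.
Qed.

Lemma tf_le n : tf n <= t0.
Proof.
  induction n; [cbn; lra|]. pose proof (tf_dec n). pose proof (tf_pos n).
  assert (tf n / (tf n + 2) <= 1).
  { apply (Rmult_le_reg_r (tf n + 2)); [lra|]. unfold Rdiv. rewrite Rmult_assoc, Rinv_l by lra. lra. }
  nra.
Qed.

Definition cf := t0 / (t0 + 2).

Lemma cf_range : 0 <= cf < 1.
Proof. unfold cf. split.
  - apply Rlt_le, Rdiv_lt_0_compat; lra.
  - apply (Rmult_lt_reg_r (t0 + 2)); [lra|]. unfold Rdiv. rewrite Rmult_assoc, Rinv_l by lra. lra.
Qed.

Lemma tf_geom n : tf n <= t0 * cf ^ n.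
Proof.
  induction n; [cbn; lra|]. pose proof (tf_dec n). pose proof (tf_pos n). pose proof (tf_le n).
  assert (tf n / (tf n + 2) <= cf).
  { unfold cf. apply (Rmult_le_reg_r ((tf n + 2) * (t0 + 2))); [nra|].
    replace (tf n / (tf n + 2) * ((tf n + 2) * (t0 + 2))) with (tf n * (t0 + 2)) by (field; lra).
    replace (t0 / (t0 + 2) * ((tf n + 2) * (t0 + 2))) with (t0 * (tf n + 2)) by (field; lra).
    nra. }
  assert (0 <= tf n / (tf n + 2)) by (apply Rlt_le, Rdiv_lt_0_compat; lra).
  pose proof cf_range.
  cbn [pow]. assert (tf n * (tf n / (tf n + 2)) <= t0 * cf ^ n * cf).
  { apply Rmult_le_compat; lra. }
  lra.
Qed.

Lemma ex_u_fwd : ex_series (fun n => uz (Z.of_nat n)).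
Proof.
  apply (dal _ (t0 * (2 + t0)) cf).
  - intro n. unfold uz. pose proof (az_pos (Z.of_nat n)). pose proof (tz_pos (Z.of_nat n)). nra.
  - exact cf_range.
  - intro n. unfold uz. rewrite !az_nat, !tz_nat. cbn [af].
    pose proof (af_pos n). pose proof (tf_pos n). pose proof (tf_pos (S n)).
    pose proof (tf_geom (S n)). pose proof (tf_le (S n)). pose proof cf_range.
    assert (cf ^ n >= 0) by (apply Rle_ge, pow_le; lra).
    assert (tf (S n) <= t0 * cf ^ n).
    { cbn [pow] in *. assert (t0 * (cf * cf ^ n) <= t0 * cf ^ n) by nra. lra. }
    assert (tf (S n) * (2 + tf (S n)) <= t0 * (2 + t0) * cf ^ n) by nra.
    assert (0 < af n * (2 + tf n)) by nra.
    replace (af n * (2 + tf n) * tf (S n) * (2 + tf (S n))) with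
      ((af n * (2 + tf n)) * (tf (S n) * (2 + tf (S n)))) by ring.
    replace (af n * (2 + tf n) * (t0 * (2 + t0) * cf ^ n)) with
      ((af n * (2 + tf n)) * (t0 * (2 + t0) * cf ^ n)) by ring.
    apply Rmult_le_compat_l; lra.
Qed.

Lemma ex_v_fwd : ex_series (fun n => vz (Z.of_nat n)).
Proof.
  apply (@ex_series_le R_AbsRing R_CompleteNormedModule _ (fun n => uz (Z.of_nat n) * t0 ^ 2)).
  2:{ apply ex_series_scal_r, ex_u_fwd. }
  intro n. change (norm (vz (Z.of_nat n))) with (Rabs (vz (Z.of_nat n))).
  unfold vz, uz. rewrite az_nat, tz_nat.
  pose proof (af_pos n). pose proof (tf_pos n). pose proof (tf_le n).
  rewrite Rabs_pos_eq by nra.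
  assert (tf n ^ 2 <= t0 ^ 2) by nra.
  assert (tf n ^ 2 * af n <= t0 ^ 2 * af n) by nra.
  assert (0 <= t0 ^ 2 * af n * (1 + tf n)).
  { apply Rmult_le_pos; [apply Rmult_le_pos|]; try lra. apply pow2_ge_0. }
  lra.
Qed.

Lemma tb_grow n : tb n * (1 + 2 * tb n) <= tb (S n).
Proof.
  cbn [tb]. rewrite <- (Hm_eq (tb n) (tb_pos n)). pose proof (Hm_pos (tb n) (tb_pos n)).
  set (h := Hm (tb n)) in *.
  apply (Rmult_le_reg_r (h + 2)); [lra|]. unfold Rdiv. rewrite Rmult_assoc, Rinv_l by lra. nra.
Qed.

Lemma tb_ge n : t0 <= tb n.
Proof. induction n; [cbn; lra|]. pose proof (tb_grow n). pose proof (tb_pos n). nra. Qed.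

Lemma tb_geom n : t0 * (1 + 2 * t0) ^ n <= tb n.
Proof. induction n; [cbn; lra|]. pose proof (tb_grow n). pose proof (tb_pos n). pose proof (tb_ge n).
  cbn [pow]. assert (tb n * (1 + 2 * t0) <= tb n * (1 + 2 * tb n)) by nra. nra. Qed.

Lemma ex_u_bwd : ex_series (fun n => uz (- Z.of_nat n)).
Proof.
  set (d := 1 + 2 * t0).
  apply (dal _ (/ (2 * t0)) (/ d)).
  - intro n. unfold uz. pose proof (az_pos (- Z.of_nat n)). pose proof (tz_pos (- Z.of_nat n)). nra.
  - unfold d. split.
    + apply Rlt_le, Rinv_0_lt_compat. lra.
    + rewrite <- Rinv_1. apply Rinv_lt_contravar; lra.
  - intro n. unfold uz. rewrite !az_neg, !tz_neg. cbn [ab].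
    pose proof (ab_pos n). pose proof (tb_pos n). pose proof (tb_pos (S n)).
    pose proof (tb_geom n). fold d in H2.
    assert (0 < d ^ n) by (apply pow_lt; unfold d; lra).
    rewrite pow_inv.
    replace (ab n / ((2 + tb (S n)) * tb n) * (2 + tb (S n))) with
      ((ab n * (2 + tb n)) * / (tb n * (2 + tb n))) by (field; lra).
    apply Rmult_le_compat_l; [nra|].
    rewrite <- Rinv_mult. apply Rinv_le_contravar; [nra|].
    assert (t0 * d ^ n * 2 <= tb n * 2) by lra. nra.
Qed.

Lemma exR (f : Z -> R) : ex_series (fun n => f (Z.of_nat n)) ->
  forall i, ex_series (fun k => f (i + Z.of_nat k)%Z).
Proof.
  intros H i. destruct (Z_cases i) as [[p ->]|[p ->]].
  - apply (ex_series_incr_n _ p) in H.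
    apply (ex_series_ext (fun k => f (Z.of_nat (p + k)))); [|exact H].
    intro k. f_equal. lia.
  - apply (proj2 (ex_series_incr_n (fun k => f (- Z.of_nat (S p) + Z.of_nat k)%Z) (S p))).
    apply (ex_series_ext (fun n => f (Z.of_nat n))); [|exact H].
    intro k. f_equal. lia.
Qed.

Lemma exL (f : Z -> R) : ex_series (fun n => f (- Z.of_nat n)%Z) ->
  forall i, ex_series (fun k => f (i - 1 - Z.of_nat k)%Z).
Proof.
  intros H i. pose proof (exR (fun j => f (- j)%Z) H (1 - i)%Z) as H2.
  apply (ex_series_ext (fun k => (fun j : Z => f (- j)%Z) (1 - i + Z.of_nat k)%Z)); [|exact H2]. intro k. cbv beta. f_equal. lia.
Qed.

Lemma tail0 (g : nat -> R) : ex_series g ->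
  is_lim_seq (fun n => Series (fun k => g (n + k)%nat)) 0.
Proof.
  intro H. apply is_lim_seq_incr_1.
  apply (is_lim_seq_ext (fun n => Series g - sum_f_R0 g n)).
  { intro n. rewrite (Series_incr_n g (S n)); [simpl; ring | lia | exact H]. }
  replace 0 with (Series g - Series g) by ring.
  apply is_lim_seq_minus'; [apply is_lim_seq_const|].
  apply is_lim_seq_Reals. pose proof (Series_correct g H) as C.
  apply is_series_Reals in C. exact C.
Qed.

Lemma Series_nonneg (g : nat -> R) : (forall n, 0 <= g n) -> ex_series g -> 0 <= Series g.
Proof.
  intros Hg H. pose proof (Series_le (fun _ => 0) g) as L.
  rewrite (Series_ext (fun _ => 0) (fun n => 0 * 0)) in L by (intro; ring).
  rewrite Series_scal_l in L. rewrite Rmult_0_l in L. apply L; [|exact H].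
  intro n. split; [lra | apply Hg].
Qed.

Definition RS (f : Z -> R) (i : Z) : R := Series (fun k => f (i + Z.of_nat k)%Z).
Definition LS (f : Z -> R) (i : Z) : R := Series (fun k => f (i - 1 - Z.of_nat k)%Z).

Lemma RS_step f : ex_series (fun n => f (Z.of_nat n)) -> forall i, RS f i = f i + RS f (i + 1)%Z.
Proof.
  intros H i. unfold RS. rewrite Series_incr_1 by (apply exR, H).
  replace (i + Z.of_nat 0)%Z with i by lia. f_equal. apply Series_ext. intro k. f_equal. lia.
Qed.

Lemma LS_step f : ex_series (fun n => f (- Z.of_nat n)%Z) -> forall i, LS f (i + 1)%Z = f i + LS f i.
Proof.
  intros H i. unfold LS. rewrite Series_incr_1 by (apply exL, H).
  replace (i + 1 - 1 - Z.of_nat 0)%Z with i by lia. f_equal. apply Series_ext. intro k. f_equal. lia.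
Qed.

Lemma u_rel i : uz i = az (i+1) ^ 2 / bz (i+1).
Proof.
  unfold uz, bz. rewrite az_step. pose proof (az_pos i). pose proof (tz_pos i). pose proof (tz_pos (i+1)).
  field. split; lra.
Qed.

Lemma v_rel i : vz i = az (i+1) + 2 * bz (i+1).
Proof.
  unfold vz, bz. rewrite az_step.
  transitivity (az i * (2 + tz i) * (tz (i+1) * (1 + 2 * tz (i+1)))); [|ring].
  rewrite tz_R. pose proof (tz_pos i). field. lra.
Qed.

Lemma exuf : ex_series (fun n => uz (Z.of_nat n)). Proof. exact ex_u_fwd. Qed.
Lemma exub : ex_series (fun n => uz (- Z.of_nat n)%Z). Proof. exact ex_u_bwd. Qed.
Lemma exvf : ex_series (fun n => vz (Z.of_nat n)). Proof. exact ex_v_fwd. Qed.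

Definition SS : R := LS uz 0 + RS uz 0.

Lemma total i : LS uz i + RS uz i = SS.
Proof.
  revert i. apply ZindR; [reflexivity| |].
  - intros i Hi. cbv beta in *. rewrite LS_step by exact exub. rewrite (RS_step _ exuf i) in Hi. lra.
  - intros i Hi. cbv beta in *. pose proof (LS_step _ exub (i-1)) as E1. pose proof (RS_step _ exuf (i-1)) as E2.
    replace (i - 1 + 1)%Z with i in E1, E2 by ring. lra.
Qed.

Lemma uz_pos i : 0 < uz i.
Proof. unfold uz. pose proof (az_pos i). pose proof (tz_pos i). nra. Qed.
Lemma vz_pos i : 0 < vz i.
Proof. unfold vz. pose proof (az_pos i). pose proof (tz_pos i). apply Rmult_lt_0_compat; [apply pow_lt|]; lra. Qed.

Lemma LS_nonneg f : (forall i, 0 < f i) -> ex_series (fun n => f (- Z.of_nat n)%Z) -> forall i, 0 <= LS f i.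
Proof. intros Hp H i. unfold LS. apply Series_nonneg; [intro; apply Rlt_le, Hp | apply exL, H]. Qed.
Lemma RS_nonneg f : (forall i, 0 < f i) -> ex_series (fun n => f (Z.of_nat n)) -> forall i, 0 <= RS f i.
Proof. intros Hp H i. unfold RS. apply Series_nonneg; [intro; apply Rlt_le, Hp | apply exR, H]. Qed.

Lemma SS_pos : 0 < SS.
Proof.
  unfold SS. rewrite (RS_step _ exuf 0).
  pose proof (LS_nonneg _ uz_pos exub 0). pose proof (RS_nonneg _ uz_pos exuf (0+1)).
  pose proof (uz_pos 0). lra.
Qed.

Definition Qc : quad :=
  Quad (fun i => az i / SS) (fun i => bz i / SS) (fun i => LS uz i / SS) (fun i => RS vz i / SS).

Lemma Qc_pos : positive_solution Qc.
Proof.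
  pose proof SS_pos. split.
  - intro i. unfold Qc. cbn [qa qb qm qn].
    pose proof (az_pos i) as Ha. pose proof (tz_pos i) as Ht.
    assert (Pa : 0 < az i / SS) by (apply Rdiv_lt_0_compat; lra).
    assert (Pb : 0 < bz i / SS) by (unfold bz; apply Rdiv_lt_0_compat; nra).
    split; [lra|]. split; [lra|].
    apply loc_eqs_conv; try assumption.
    + rewrite LS_step by exact exub. unfold uz, bz. field. lra.
    + pose proof (LS_step _ exub (i-1)) as E. replace (i - 1 + 1)%Z with i in E by ring.
      rewrite E. rewrite (u_rel (i-1)). replace (i - 1 + 1)%Z with i by ring.
      unfold bz in *. field. split; lra.
    + pose proof (RS_step _ exvf (i-1)) as E. replace (i - 1 + 1)%Z with i in E by ring.
      rewrite E. rewrite (v_rel (i-1)). replace (i - 1 + 1)%Z with i by ring.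
      field. lra.
    + rewrite (RS_step _ exvf i). unfold vz, bz. field. split; lra.
  - intro i. unfold Qc. cbn [qa qb]. pose proof (az_pos i). pose proof (tz_pos i).
    split; [apply Rdiv_lt_0_compat; lra|]. unfold bz. apply Rdiv_lt_0_compat; nra.
Qed.

Lemma Qc_std : standard Qc.
Proof.
  pose proof SS_pos as HS. split; [exact Qc_pos|]. split; [|split].
  - unfold lim_minus. apply is_lim_seq_Reals.
    apply (is_lim_seq_ext (fun n => Series (fun k => uz (- Z.of_nat (S n + k))) * / SS)).
    { intro n. unfold Qc; cbn [qm]. unfold LS, Rdiv. f_equal. apply Series_ext. intro k. f_equal. lia. }
    replace 0 with (0 * / SS) by ring. apply is_lim_seq_mult'; [|apply is_lim_seq_const].
    apply (is_lim_seq_incr_1 (fun n => Series (fun k => uz (- Z.of_nat (n + k))))).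
    apply (tail0 (fun k => uz (- Z.of_nat k))). exact exub.
  - unfold lim_plus. apply is_lim_seq_Reals.
    apply (is_lim_seq_ext (fun n => Series (fun k => vz (Z.of_nat (n + k))) * / SS)).
    { intro n. unfold Qc; cbn [qn]. unfold RS, Rdiv. f_equal. apply Series_ext. intro k. f_equal. lia. }
    replace 0 with (0 * / SS) by ring. apply is_lim_seq_mult'; [|apply is_lim_seq_const].
    apply (tail0 (fun k => vz (Z.of_nat k))). exact exvf.
  - unfold lim_plus. apply is_lim_seq_Reals.
    apply (is_lim_seq_ext (fun n => (SS - Series (fun k => uz (Z.of_nat (n + k)))) * / SS)).
    { intro n. unfold Qc; cbn [qm]. rewrite <- (total (Z.of_nat n)). unfold Rdiv. f_equal.
      replace (Series (fun k : nat => uz (Z.of_nat (n + k)))) with (RS uz (Z.of_nat n)).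
      - ring.
      - unfold RS. apply Series_ext. intro k. f_equal. lia. }
    replace 1 with ((SS - 0) * / SS) by (field; lra). apply is_lim_seq_mult'; [|apply is_lim_seq_const].
    apply is_lim_seq_minus'; [apply is_lim_seq_const|].
    apply (tail0 (fun k => uz (Z.of_nat k))). exact exuf.
Qed.

Lemma Qc_cr : central_ratio Qc = t0 * (1 + 2 * t0).
Proof.
  pose proof SS_pos as HS.
  unfold central_ratio, Qc; cbn [qm qn].
  pose proof (RS_step _ exvf (-1)) as E1. pose proof (LS_step _ exub (-1)) as E2.
  replace (-1 + 1)%Z with 0%Z in E1, E2 by ring.
  assert (Hu : LS uz 0 - LS uz (-1) = uz (-1)) by lra.
  assert (Hv : RS vz (-1) - RS vz 0 = vz (-1)) by lra.
  pose proof (uz_pos (-1)).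
  transitivity (vz (-1) / uz (-1)).
  { rewrite <- Hu, <- Hv. field. split; lra. }
  pose proof (tz_R (-1)) as R. replace (-1 + 1)%Z with 0%Z in R by ring.
  replace (tz 0) with t0 in R by (symmetry; exact (tz_nat 0)).
  rewrite R. unfold vz, uz. pose proof (az_pos (-1)). pose proof (tz_pos (-1)).
  field. split; lra.
Qed.

End Seq.

Lemma exist_std (x : R) : 0 < x -> exists q, standard q /\ central_ratio q = x.
Proof.
  intro hx. pose proof (Tm_pos x hx) as Hp.
  exists (Qc (Tm x)). split.
  - apply Qc_std. exact Hp.
  - rewrite Qc_cr by exact Hp. apply Tm_eq. lra.
Qed.

Lemma std_sol_spec x : (exists q, standard q /\ central_ratio q = x) ->
  standard (std_sol x) /\ central_ratio (std_sol x) = x.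
Proof.
  intro H. unfold std_sol. apply (epsilon_spec (inhabits zero_quad) (fun q => standard q /\ central_ratio q = x)). exact H.
Qed.

Theorem mainTheorem16 (x : R) (k : Z) (hx : 0 < x) :
  shift_quad k (std_sol x) = std_sol (s_Z k x).
Proof.
  destruct (std_sol_spec x (exist_std x hx)) as [S C].
  assert (S' := standard_shift _ k S).
  assert (C' : central_ratio (shift_quad k (std_sol x)) = s_Z k x).
  { rewrite cr_shift, (Lq_sZ _ (proj1 S)), <- cr_Lq0, C. reflexivity. }
  destruct (std_sol_spec (s_Z k x) (ex_intro _ _ (conj S' C'))) as [S2 C2].
  apply uniq_std; [exact S' | exact S2 |]. rewrite C', C2. reflexivity.
Qed.
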